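(* Let $G=(V,E)$ be a transitive directed graph, and let $\mathrm{S}=(S_v,S_e)$ be a TCK family for $G$ on a Hilbert space $\mathcal{H}$ with free semigroupoid algebra $\mathfrak{S}$. Suppose that for every $v\in V$ there exists $w\in V$ such that $S_v\mathfrak{S}S_w=S_vB(\mathcal{H})S_w$. Then $\mathfrak{S}=B(\mathcal{H})$.
   Context: A directed graph $G=(V,E,r,s)$; a path $e_1\cdots e_n$ has $s(e_i)=r(e_{i+1})$; $G$ is transitive if there is a path between any vertex and any other. A TCK family on $\mathcal{H}$: the $S_v$ are pairwise orthogonal projections, $S_e^*S_e=S_{s(e)}$, and $\sum_{e\in F}S_eS_e^*\le S_v$ for finite $F\subseteq r^{-1}(v)$; it is assumed nondegenerate, i.e. $\mathrm{SOT}\text{-}\sum_{v\in V}S_v=I_{\mathcal{H}}$. The free semigroupoid algebra $\mathfrak{S}$ is the WOT-closed algebra generated by $\{S_v,S_e\}$. *)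

(* Defs.v *)
From HB Require Import structures.
From mathcomp Require Import all_boot all_order all_algebra.
From mathcomp Require Import complex.
From mathcomp Require Import reals.
From Stdlib Require List.
Set Implicit Arguments. Unset Strict Implicit. Unset Printing Implicit Defensive.
Import Order.TTheory GRing.Theory Num.Theory.
Local Open Scope ring_scope.

Section Hilbert.
Variable R : realType.
Local Notation C := R[i].
Variable H : lmodType C.
Variable inner : H -> H -> C.

Definition nsq (x : H) : C := inner x x.

Definition is_inner_product : Prop :=
  [/\ (forall (a : C) (x y z : H), inner (a *: x + y) z = a * inner x z + inner y z),
      (forall x y : H, inner y x = (inner x y)^*),
      (forall x : H, 0 <= inner x x) &
      (forall x : H, inner x x = 0 -> x = 0)].

Definition cauchy_seq (u : nat -> H) : Prop :=
  forall eps : C, 0 < eps -> exists N : nat, forall m n : nat,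
    (N <= m)%N -> (N <= n)%N -> nsq (u m - u n) < eps.

Definition converges_to (u : nat -> H) (l : H) : Prop :=
  forall eps : C, 0 < eps -> exists N : nat, forall n : nat,
    (N <= n)%N -> nsq (u n - l) < eps.

Definition is_hilbert_space : Prop :=
  is_inner_product /\
  (forall u : nat -> H, cauchy_seq u -> exists l : H, converges_to u l).

Definition bounded_op (T : H -> H) : Prop :=
  [/\ (forall x y : H, T (x + y) = T x + T y),
      (forall (a : C) (x : H), T (a *: x) = a *: T x) &
      exists M : C, forall x : H, nsq (T x) <= M * nsq x].

Definition is_adjoint (T Tstar : H -> H) : Prop :=
  forall x y : H, inner (T x) y = inner x (Tstar y).

Definition is_projection (P : H -> H) : Prop :=
  [/\ bounded_op P, (forall x, P (P x) = P x) & is_adjoint P P].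

Definition in_wot_closure (A : (H -> H) -> Prop) (T : H -> H) : Prop :=
  forall (ps : seq (H * H)%type) (eps : C), 0 < eps ->
    exists B : H -> H, A B /\
      forall p, List.In p ps -> `|inner (T p.1) p.2 - inner (B p.1) p.2| < eps.

Definition wot_closed_algebra (A : (H -> H) -> Prop) : Prop :=
  [/\ (forall T, A T -> bounded_op T),
      A (fun _ => 0),
      (forall T U, A T -> A U -> A (fun x => T x + U x)),
      (forall (c : C) T, A T -> A (fun x => c *: T x)) &
      (forall T U, A T -> A U -> A (fun x => T (U x)))] /\
      (forall T, bounded_op T -> in_wot_closure A T -> A T).

Definition wot_generated (gens : (H -> H) -> Prop) (T : H -> H) : Prop :=
  forall A : (H -> H) -> Prop,
    wot_closed_algebra A -> (forall G, gens G -> A G) -> A T.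

Section Graph.
Variables (V E : Type) (r s : E -> V).

Fixpoint is_path (p : seq E) : Prop :=
  match p with
  | e1 :: ((e2 :: _) as q) => s e1 = r e2 /\ is_path q
  | _ => True
  end.

Definition transitive_graph : Prop :=
  forall u w : V, u <> w ->
    exists (e0 : E) (p : seq E), is_path (e0 :: p) /\
      r e0 = u /\ s (last e0 p) = w.

Definition TCK_family (Sv : V -> H -> H) (Se Sstar : E -> H -> H) : Prop :=
  [/\ (forall v, is_projection (Sv v)),
      (forall v w, v <> w -> forall x, Sv v (Sv w x) = 0),
      (forall e, bounded_op (Se e) /\ is_adjoint (Se e) (Sstar e)),
      (forall e x, Sstar e (Se e x) = Sv (s e) x) &
      (forall (v : V) (F : seq E), List.NoDup F ->
         (forall e, List.In e F -> r e = v) ->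
         forall x : H,
           \sum_(e <- F) inner (Se e (Sstar e x)) x <= inner (Sv v x) x)].

Definition TCK_nondegenerate (Sv : V -> H -> H) : Prop :=
  forall (x : H) (eps : C), 0 < eps -> exists F0 : seq V,
    forall F : seq V, List.NoDup F -> List.incl F0 F ->
      nsq (\sum_(v <- F) Sv v x - x) < eps.

Definition free_semigroupoid_algebra (Sv : V -> H -> H) (Se : E -> H -> H) :
  (H -> H) -> Prop :=
  wot_generated (fun G => (exists v, G = Sv v) \/ (exists e, G = Se e)).

End Graph.
End Hilbert.

(* Main.v *)
Require Import Defs.
From HB Require Import structures.
From mathcomp Require Import all_boot all_order all_algebra.
From mathcomp Require Import complex.
From mathcomp Require Import reals.
From mathcomp Require Import ring.
From Stdlib Require Import FunctionalExtensionality Classical ClassicalDescription.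
From Stdlib Require List.
Import Order.TTheory GRing.Theory Num.Theory.
Local Open Scope ring_scope.

Section IP.
Variable R : realType.
Variable H : lmodType R[i].
Variable inner : H -> H -> R[i].
Hypothesis hip : is_inner_product inner.

Lemma cjE (z : R[i]) : (z^*)%C = Num.conj z.
Proof. by []. Qed.

Lemma cjD (a b : R[i]) : Num.conj (a + b) = Num.conj a + Num.conj b.
Proof. exact: rmorphD. Qed.
Lemma cjM (a b : R[i]) : Num.conj (a * b) = Num.conj a * Num.conj b.
Proof. exact: rmorphM. Qed.
Lemma cjN (a : R[i]) : Num.conj (- a) = - Num.conj a.
Proof. exact: rmorphN. Qed.

Lemma inner_lin a x y z : inner (a *: x + y) z = a * inner x z + inner y z.
Proof. by case: hip. Qed.
Lemma inner_sym x y : inner y x = Num.conj (inner x y).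
Proof. by case: hip => _ h _ _; rewrite h. Qed.
Lemma inner_ge0 x : 0 <= inner x x.
Proof. by case: hip. Qed.
Lemma inner_eq0 x : inner x x = 0 -> x = 0.
Proof. by case: hip => _ _ _ h; apply: h. Qed.

Lemma inner0l z : inner 0 z = 0.
Proof.
have := inner_lin 1 0 0 z; rewrite scaler0 addr0 mul1r => h.
by apply: (addrI (inner 0 z)); rewrite addr0 -h.
Qed.
Lemma innerDl x y z : inner (x + y) z = inner x z + inner y z.
Proof. by rewrite -[x in LHS]scale1r inner_lin mul1r. Qed.
Lemma innerZl a x z : inner (a *: x) z = a * inner x z.
Proof. by rewrite -[a *: x]addr0 inner_lin inner0l addr0. Qed.
Lemma innerNl x z : inner (- x) z = - inner x z.
Proof. by rewrite -scaleN1r innerZl mulN1r. Qed.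
Lemma innerBl x y z : inner (x - y) z = inner x z - inner y z.
Proof. by rewrite innerDl innerNl. Qed.
Lemma inner0r z : inner z 0 = 0.
Proof. by rewrite inner_sym inner0l conjC0. Qed.
Lemma innerDr x y z : inner x (y + z) = inner x y + inner x z.
Proof. by rewrite inner_sym innerDl cjD -!inner_sym. Qed.
Lemma innerZr a x z : inner x (a *: z) = Num.conj a * inner x z.
Proof. by rewrite inner_sym innerZl cjM -inner_sym. Qed.
Lemma innerNr x z : inner x (- z) = - inner x z.
Proof. by rewrite inner_sym innerNl cjN -inner_sym. Qed.
Lemma innerBr x y z : inner x (y - z) = inner x y - inner x z.
Proof. by rewrite innerDr innerNr. Qed.
Lemma nsq_conj x : Num.conj (inner x x) = inner x x.
Proof. by rewrite -inner_sym. Qed.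

Lemma eq_inner_r a b : (forall x, inner x a = inner x b) -> a = b.
Proof.
move=> h; apply/eqP; rewrite -subr_eq0; apply/eqP; apply: inner_eq0.
by rewrite innerBr h subrr.
Qed.

Lemma nsqN x : inner (- x) (- x) = inner x x.
Proof. by rewrite innerNl innerNr opprK. Qed.

Lemma nsq_add_le a b : inner (a + b) (a + b) <= 2 * inner a a + 2 * inner b b.
Proof.
have e : 2 * inner a a + 2 * inner b b - inner (a + b) (a + b) = inner (a - b) (a - b).
  rewrite !innerDl !innerNl !innerDr !innerNr; ring.
by rewrite -subr_ge0 e inner_ge0.
Qed.

Lemma CS a b : `|inner a b| ^+ 2 <= inner a a * inner b b.
Proof.
have [nb0|nbn0] := eqVneq (inner b b) 0.
  by rewrite (inner_eq0 _ nb0) !inner0r normr0 expr0n /= mulr0.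
have nbp : 0 < inner b b by rewrite lt_def nbn0 inner_ge0.
set w := inner b b *: a - inner a b *: b.
have e : inner w w = inner b b * (inner b b * inner a a - Num.conj (inner a b) * inner a b).
  rewrite /w !innerBl !innerZl !innerBr !innerZr nsq_conj (inner_sym a b).
  ring.
have := inner_ge0 w; rewrite e pmulr_rge0 // subr_ge0 normCKC [inner a a * _]mulrC.
by [].
Qed.



Lemma sq_lt (p q : R[i]) : 0 <= p -> 0 <= q -> p ^+ 2 < q ^+ 2 -> p < q.
Proof. by move=> hp hq h; rewrite -(ltr_pXn2r (n:=2) isT) ?nnegrE. Qed.

Lemma bounded_nn T : bounded_op inner T ->
  exists M, 0 <= M /\ forall x, inner (T x) (T x) <= M * inner x x.
Proof.
case=> _ _ [M hM]; exists `|M|; split=> // x.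
have h := hM x; have h0 : 0 <= M * inner x x := le_trans (inner_ge0 _) h.
by rewrite -(ger0_norm h0) normrM (ger0_norm (inner_ge0 x)) in h.
Qed.

Lemma op0 T : bounded_op inner T -> T 0 = 0.
Proof. by case=> _ hs _; have := hs 0 0; rewrite !scale0r. Qed.
Lemma opD T x y : bounded_op inner T -> T (x + y) = T x + T y.
Proof. by case=> ha _ _; rewrite ha. Qed.
Lemma opB T x y : bounded_op inner T -> T (x - y) = T x - T y.
Proof. by case=> ha hs _; rewrite ha -scaleN1r hs scaleN1r. Qed.

Arguments bounded_nn {T}.
Arguments op0 {T}.
Arguments opD {T x y}.
Arguments opB {T x y}.

Lemma bounded_comp T U : bounded_op inner T -> bounded_op inner U ->
  bounded_op inner (fun x => T (U x)).
Proof.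
move=> hT hU.
have [M [M0 hM]] := bounded_nn hT; have [N [N0 hN]] := bounded_nn hU.
case: hT => aT sT _; case: hU => aU sU _; split.
- by move=> x y; rewrite aU aT.
- by move=> a x; rewrite sU sT.
- exists (M * N) => x; apply: le_trans (hM _) _.
  by rewrite -mulrA; apply: ler_wpM2l => //; exact: hN.
Qed.

Arguments bounded_comp {T U}.

Lemma bounded_add T U : bounded_op inner T -> bounded_op inner U ->
  bounded_op inner (fun x => T x + U x).
Proof.
move=> hT hU.
have [M [M0 hM]] := bounded_nn hT; have [N [N0 hN]] := bounded_nn hU.
case: hT => aT sT _; case: hU => aU sU _; split.
- by move=> x y; rewrite aU aT addrACA.
- by move=> a x; rewrite sU sT scalerDr.
- exists (2 * M + 2 * N) => x; apply: le_trans (nsq_add_le _ _) _.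
  rewrite /Defs.nsq [X in _ <= X]mulrDl -2!mulrA; apply: lerD; apply: ler_wpM2l => //.
Qed.

Lemma bounded_scale c T : bounded_op inner T ->
  bounded_op inner (fun x => c *: T x).
Proof.
move=> hT.
have [M [M0 hM]] := bounded_nn hT.
case: hT => aT sT _; split.
- by move=> x y; rewrite aT scalerDr.
- by move=> a x; rewrite sT !scalerA mulrC.
- exists (`|c| ^+ 2 * M) => x.
  rewrite /Defs.nsq innerZl innerZr mulrA -normCK -[X in _ <= X]mulrA.
  by apply: ler_wpM2l; [exact: exprn_ge0 | exact: hM].
Qed.

Lemma bounded_zero : bounded_op inner (fun _ => 0).
Proof.
split.
- by move=> x y; rewrite addr0.
- by move=> a x; rewrite scaler0.
- by exists 0 => x; rewrite /Defs.nsq inner0l mul0r.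
Qed.

Section Graph.
Variables (V E : Type) (r s : E -> V).
Variables (Sv : V -> H -> H) (Se Sstar : E -> H -> H).
Hypothesis htck : TCK_family inner r s Sv Se Sstar.

Local Notation FSA := (free_semigroupoid_algebra inner Sv Se).

Lemma FSA_ext f g : (forall x, f x = g x) -> FSA f -> FSA g.
Proof. by move=> /functional_extensionality ->. Qed.
Lemma FSA_comp T U : FSA T -> FSA U -> FSA (fun x => T (U x)).
Proof.
move=> hT hU A hA hg; case: (hA) => [[_ _ _ _ hc] _].
exact: hc (hT A hA hg) (hU A hA hg).
Qed.
Lemma FSA_add T U : FSA T -> FSA U -> FSA (fun x => T x + U x).
Proof.
move=> hT hU A hA hg; case: (hA) => [[_ _ hc _ _] _].
exact: hc (hT A hA hg) (hU A hA hg).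
Qed.
Arguments FSA_ext {f g}.
Arguments FSA_comp {T U}.
Arguments FSA_add {T U}.

Lemma FSA_zero : FSA (fun _ => 0).
Proof. by move=> A hA hg; case: (hA) => [[_ hc _ _ _] _]. Qed.
Lemma FSA_Sv v : FSA (Sv v).
Proof. by move=> A _ hg; apply: hg; left; exists v. Qed.
Lemma FSA_Se e : FSA (Se e).
Proof. by move=> A _ hg; apply: hg; right; exists e. Qed.

Lemma Sv_bd v : bounded_op inner (Sv v).
Proof. by case: htck => h _ _ _ _; case: (h v). Qed.
Lemma projE v x : Sv v (Sv v x) = Sv v x.
Proof. by case: htck => h _ _ _ _; case: (h v). Qed.
Lemma projadj v a b : inner (Sv v a) b = inner a (Sv v b).
Proof. by case: htck => h _ _ _ _; case: (h v) => _ _ ->. Qed.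
Lemma Se_bd e : bounded_op inner (Se e).
Proof. by case: htck => _ _ h _ _; case: (h e). Qed.
Lemma adjE e a b : inner (Se e a) b = inner a (Sstar e b).
Proof. by case: htck => _ _ h _ _; case: (h e) => _ ->. Qed.
Lemma SS e x : Sstar e (Se e x) = Sv (s e) x.
Proof. by case: htck => _ _ _ h _; rewrite h. Qed.

Lemma ineq1 e x :
  inner (Sstar e x) (Sstar e x) <= inner (Sv (r e) x) (Sv (r e) x).
Proof.
case: htck => _ _ _ _ h.
rewrite -projadj projE; have := h (r e) [:: e] _ _ x; rewrite big_seq1 adjE.
apply.
- by constructor; [by [] | constructor].
- by move=> e' [<-|[]].
Qed.

Lemma Sstar_bd e : bounded_op inner (Sstar e).
Proof.
have [M [M0 hM]] := bounded_nn (Sv_bd (r e)).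
split.
- move=> y z; apply: eq_inner_r => x.
  by rewrite innerDr -!adjE innerDr.
- move=> a y; apply: eq_inner_r => x.
  by rewrite innerZr -!adjE innerZr.
- by exists M => x; apply: le_trans (ineq1 e x) (hM x).
Qed.

Lemma fact1 e x : Sv (r e) (Se e x) = Se e x.
Proof.
have key : forall z, Sv (r e) z = 0 -> Sstar e z = 0.
  move=> z hz; apply: inner_eq0; apply/le_anti; rewrite inner_ge0 andbT.
  by have := ineq1 e z; rewrite hz inner0l.
have Pz : Sv (r e) (Se e x - Sv (r e) (Se e x)) = 0.
  by rewrite (opB (Sv_bd _)) projE subrr.
apply/eqP; rewrite eq_sym -subr_eq0; apply/eqP; apply: inner_eq0.
rewrite innerBl [inner (Se e x) _]adjE (key _ Pz) inner0r.
by rewrite projadj Pz inner0r subrr.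
Qed.

Definition Good u w := forall T, bounded_op inner T ->
  FSA (fun x => Sv u (T (Sv w x))).

Lemma good_step u e : Good u (r e) -> Good u (s e).
Proof.
move=> hg T hT.
have hT' := bounded_comp hT (Sstar_bd e).
have := FSA_comp (hg _ hT') (FSA_Se e).
by apply: FSA_ext => x /=; rewrite fact1 SS.
Qed.

Lemma good_path u p : forall e0, is_path r s (e0 :: p) -> Good u (r e0) ->
  Good u (s (last e0 p)).
Proof.
elim: p => [|e1 p IH] e0 /=.
  by move=> _; apply: good_step.
move=> [hse hp] hg; apply: IH hp _.
by rewrite -hse; apply: good_step.
Qed.

Definition Q (F : seq V) (x : H) : H := \sum_(v <- F) Sv v x.

Lemma Qadj F x y : inner (Q F x) y = inner x (Q F y).
Proof.
rewrite /Q; elim: F => [|v F IH]; first by rewrite !big_nil inner0l inner0r.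
by rewrite !big_cons innerDl innerDr IH projadj.
Qed.

Lemma FSA_left_sum u T F : bounded_op inner T ->
  (forall w, FSA (fun x => Sv u (T (Sv w x)))) ->
  FSA (fun x => Sv u (T (Q F x))).
Proof.
move=> hT hw; rewrite /Q; elim: F => [|v F IH].
  by apply: (FSA_ext _ FSA_zero) => x; rewrite big_nil (op0 hT) (op0 (Sv_bd u)).
apply: (FSA_ext _ (FSA_add (hw v) IH)) => x.
by rewrite big_cons (opD hT) (opD (Sv_bd u)).
Qed.

Lemma FSA_QTQ G F T : bounded_op inner T ->
  (forall u w, FSA (fun x => Sv u (T (Sv w x)))) ->
  FSA (fun x => Q G (T (Q F x))).
Proof.
move=> hT hw; rewrite {1}/Q; elim: G => [|v G IH].
  by apply: (FSA_ext _ FSA_zero) => x; rewrite big_nil.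
apply: (FSA_ext _ (FSA_add (FSA_left_sum v T F hT (hw v)) IH)) => x.
by rewrite big_cons.
Qed.


Hypothesis hnd : TCK_nondegenerate inner Sv.

Lemma approx1 T (hT : bounded_op inner T) x y (eps : R[i]) : 0 < eps ->
  exists F1 : seq V, forall F, List.NoDup F -> List.incl F1 F ->
  `|inner (T x) y - inner (Q F (T (Q F x))) y| < eps.
Proof.
move=> he.
have [M [M0 hM]] := bounded_nn hT.
pose a := inner (T x) (T x); pose b := inner y y.
have a0 : 0 <= a := inner_ge0 _.
have b0 : 0 <= b := inner_ge0 _.
pose K := a + M * (2 + 2 * b) + 1.
have Mb0 : 0 <= M * (2 + 2 * b) by rewrite mulr_ge0 // addr_ge0 // mulr_ge0.
have Kp : 0 < K by apply: ltr_pwDr; [exact: ltr01 | rewrite addr_ge0].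
have h2 : 0 < eps / 2 by rewrite divr_gt0 // ltr0n.
pose e2 := (eps / 2) ^+ 2.
have e2p : 0 < e2 by rewrite exprn_gt0.
pose d := e2 / K.
have dp : 0 < d := divr_gt0 e2p Kp.
have e2E : e2 = K * d by rewrite /d mulrC divfK // gt_eqF.
have [Fx hFx] := hnd x d dp.
have [Fy hFy] := hnd y d dp.
have [Fy1 hFy1] := hnd y 1 ltr01.
exists (Fx ++ Fy ++ Fy1) => F nd inc.
have hx : inner (Q F x - x) (Q F x - x) < d.
  exact: (hFx F nd (List.incl_tran (List.incl_appl _ (List.incl_refl _)) inc)).
have hy : inner (Q F y - y) (Q F y - y) < d.
  exact: (hFy F nd (List.incl_tran
     (List.incl_appr _ (List.incl_appl _ (List.incl_refl _))) inc)).
have hy1 : inner (Q F y - y) (Q F y - y) < 1.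
  exact: (hFy1 F nd (List.incl_tran
     (List.incl_appr _ (List.incl_appr _ (List.incl_refl _))) inc)).
rewrite Qadj.
set Qx := Q F x in hx *; set Qy := Q F y in hy hy1 *.
have eD : inner (T x) y - inner (T Qx) Qy =
    inner (T x) (y - Qy) + inner (T (x - Qx)) Qy.
  by rewrite (opB hT) innerBr innerBl; ring.
rewrite eD (splitr eps); apply: le_lt_trans (ler_normD _ _) _.
apply: ltrD.
- apply: sq_lt => //; first exact: ltW.
  apply: le_lt_trans (CS _ _) _.
  rewrite -opprB nsqN -/a.
  apply: le_lt_trans (ler_wpM2l a0 (ltW hy)) _.
  rewrite -/e2 e2E ltr_pM2r //.
  by apply: ltr_pwDr => //; rewrite lerDl.
- apply: sq_lt => //; first exact: ltW.
  apply: le_lt_trans (CS _ _) _.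
  have h1 : inner (T (x - Qx)) (T (x - Qx)) <= M * d.
    apply: le_trans (hM _) _; apply: ler_wpM2l => //.
    by rewrite -opprB nsqN; exact: ltW.
  have h2' : inner Qy Qy <= 2 + 2 * b.
    have := nsq_add_le (Qy - y) y; rewrite subrK => h; apply: le_trans h _.
    apply: lerD => //.
    by rewrite -[X in _ <= X]mulr1; apply: ler_wpM2l => //; exact: ltW.
  apply: le_lt_trans (ler_pM (inner_ge0 _) (inner_ge0 _) h1 h2') _.
  rewrite -/e2 e2E mulrAC ltr_pM2r //.
  by apply: ltr_pwDr => //; rewrite lerDr.
Qed.

Lemma approx_list T (hT : bounded_op inner T) (ps : seq (H * H)) (eps : R[i]) : 0 < eps ->
  exists F0 : seq V, forall F, List.NoDup F -> List.incl F0 F ->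
  forall p, List.In p ps ->
  `|inner (T p.1) p.2 - inner (Q F (T (Q F p.1))) p.2| < eps.
Proof.
move=> he; elim: ps => [|p ps [F0 IH]].
  by exists [::] => F _ _ p [].
have [F1 h1] := approx1 T hT p.1 p.2 eps he.
exists (F1 ++ F0) => F nd inc q [<-|hq].
  exact: (h1 F nd (List.incl_tran (List.incl_appl _ (List.incl_refl _)) inc)).
exact: (IH F nd (List.incl_tran (List.incl_appr _ (List.incl_refl _)) inc)).
Qed.

Hypothesis htrans : transitive_graph r s.
Hypothesis hv : forall v : V, exists w : V, forall X : H -> H,
     (exists A, FSA A /\ X = (fun x => Sv v (A (Sv w x)))) <->
     (exists T, bounded_op inner T /\ X = (fun x => Sv v (T (Sv w x)))).

Lemma all_good u u' : Good u u'.
Proof.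
have [w hw] := hv u.
have gw : Good u w.
  move=> T hT.
  have [A [hA eX]] := (hw (fun x => Sv u (T (Sv w x)))).2 (ex_intro _ T (conj hT erefl)).
  rewrite eX.
  exact: (FSA_comp (FSA_Sv u) (FSA_comp hA (FSA_Sv w))).
case: (classic (w = u')) => [<-|ne] //.
have [e0 [p [hp [hr hs']]]] := htrans _ _ ne.
rewrite -hs'; apply: good_path => //.
by rewrite hr.
Qed.

Lemma main T : bounded_op inner T <-> FSA T.
Proof.
split.
- move=> hT A hA hg.
  case: (hA) => [[hbd h0 hadd hsc hcomp] hwot].
  apply: (hwot _ hT) => ps eps he.
  have [F0 hF0] := approx_list T hT ps eps he.
  pose dec := fun x y : V => excluded_middle_informative (x = y).
  exists (fun x => Q (List.nodup dec F0) (T (Q (List.nodup dec F0) x))); split.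
    exact: (FSA_QTQ (List.nodup dec F0) (List.nodup dec F0) T hT
             (fun u w => all_good u w T hT) A hA hg).
  move=> p hp; apply: hF0 => //.
    exact: List.NoDup_nodup.
  by move=> a ha; apply/List.nodup_In.
- move=> hT; apply: hT.
    split; first split.
    + by [].
    + exact: bounded_zero.
    + exact: bounded_add.
    + exact: bounded_scale.
    + by move=> T0 U0; apply: bounded_comp.
    + by move=> T0 hb _.
  by move=> G [[v ->]|[e ->]]; [exact: Sv_bd | exact: Se_bd].
Qed.

End Graph.
End IP.


Theorem lemma3p2 (R : realType) (H : lmodType R[i]) (inner : H -> H -> R[i])
  (V E : Type) (r s : E -> V)
  (Sv : V -> H -> H) (Se Sstar : E -> H -> H) :
  is_hilbert_space inner ->
  transitive_graph r s ->
  TCK_family inner r s Sv Se Sstar ->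
  TCK_nondegenerate inner Sv ->
  (forall v : V, exists w : V, forall X : H -> H,
     (exists A, free_semigroupoid_algebra inner Sv Se A /\
                X = (fun x => Sv v (A (Sv w x)))) <->
     (exists T, bounded_op inner T /\ X = (fun x => Sv v (T (Sv w x))))) ->
  forall T : H -> H, bounded_op inner T <-> free_semigroupoid_algebra inner Sv Se T.
Proof.
move=> [hip _] htrans htck hnd hv T.
exact: (@main R H inner hip V E r s Sv Se Sstar htck hnd htrans hv T).
Qed.
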